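(* Let $G$ be a finite cyclic group and $S$ a nonempty subset of $G$ such that $\Gamma=\mathrm{Cay}(G,S)$ is a connected arc-transitive normal Cayley digraph. Then every element of $S$ generates $G$, and $\mathrm{Aut}(G,S)$ acts regularly on $S$.
   Context: The Cayley digraph $\mathrm{Cay}(G,S)$ has vertex set $G$, with $x$ pointing to $y$ iff $yx^{-1}\in S$. For $g\in G$, $\widehat g$ is the permutation $x\mapsto xg$ of $G$, and $\widehat G=\{\widehat g: g\in G\}\leqslant\mathrm{Aut}(\mathrm{Cay}(G,S))$. The Cayley digraph is normal if $\widehat G$ is normal in $\mathrm{Aut}(\mathrm{Cay}(G,S))$. $\mathrm{Aut}(G,S)=\{\alpha\in\mathrm{Aut}(G): S^\alpha=S\}$. A digraph is connected if its underlying undirected graph is connected and arc-transitive if its automorphism group is transitive on its arcs. *)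

(* Defs.v *)
From mathcomp Require Import all_boot all_fingroup.
Set Implicit Arguments. Unset Strict Implicit. Unset Printing Implicit Defensive.
Local Open Scope group_scope.

(* The group G is the whole finGroupType gT (vertex set of Cay(G,S)). *)
Section Cayley.
Variable gT : finGroupType.

Definition cay_arc (S : {set gT}) (x y : gT) : bool := y * x^-1 \in S.

Definition rmul_perm (g : gT) : {perm gT} := perm (mulIg g).

Definition hatG : {set {perm gT}} := [set rmul_perm g | g : gT].

Definition AutCay (S : {set gT}) : {set {perm gT}} :=
  [set p : {perm gT} | [forall x, forall y, cay_arc S (p x) (p y) == cay_arc S x y]].

Definition normal_cayley (S : {set gT}) : Prop := hatG <| AutCay S.

Definition cay_connected (S : {set gT}) : Prop :=
  forall x y : gT, connect (fun u v => cay_arc S u v || cay_arc S v u) x y.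

Definition arc_transitive (S : {set gT}) : Prop :=
  forall x y x' y' : gT, cay_arc S x y -> cay_arc S x' y' ->
    exists2 p, p \in AutCay S & (p x = x' /\ p y = y').

Definition AutGS (S : {set gT}) : {set {perm gT}} :=
  [set a in Aut [set: gT] | a @: S == S].

Definition acts_regularly (A : {set {perm gT}}) (S : {set gT}) : Prop :=
  {in A, forall a : {perm gT}, a @: S = S} /\
  forall s t, s \in S -> t \in S -> exists! a, a \in A /\ a s = t.
End Cayley.

(* Main.v *)
Require Import Defs.
From mathcomp Require Import all_boot all_fingroup all_solvable.
Local Open Scope group_scope.

Section Aux.
Variable gT : finGroupType.
Implicit Types S : {set gT}.

Lemma conn_ind S (P : pred gT) : cay_connected S -> P 1 ->
  (forall s u, s \in S -> P (s * u) = P u) -> forall x, P x.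
Proof.
move=> conn P1 PS x.
have cl : closed (fun u v => cay_arc S u v || cay_arc S v u) P.
  move=> u v /orP[]; rewrite /cay_arc -!topredE /= => H.
    by have := PS _ u H; rewrite mulgKV => ->.
  by have := PS _ v H; rewrite mulgKV => ->.
by have := closed_connect cl (conn 1 x); rewrite -!topredE /= P1 => <-.
Qed.

Lemma AutCay_morph {S} {p} : normal_cayley S -> p \in AutCay S -> p 1 = 1 ->
  forall x y, p (x * y) = p x * p y.
Proof.
move=> /andP[_ /subsetP nH] pA p1 x g.
have /normP nHp := nH p pA.
have : rmul_perm g ^ p \in hatG gT by rewrite -nHp memJ_conjg; apply/imsetP; exists g.
case/imsetP=> h _ Eh.
have E y : p (y * g) = p y * h.
  have := congr1 (fun q : {perm gT} => q (p y)) Eh.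
  by rewrite /= /conjg !permM permK /rmul_perm !permE.
have := E 1; rewrite mul1g p1 mul1g => Eg.
by rewrite E Eg.
Qed.

Lemma AutCay_inAut S p : normal_cayley S -> p \in AutCay S -> p 1 = 1 ->
  p \in Aut [set: gT].
Proof.
move=> nS pA p1; rewrite inE; apply/andP; split; first by apply/subsetP => z _; exact: in_setT.
apply/(@morphicP gT gT) => x y _ _; exact: (AutCay_morph nS pA p1 x y).
Qed.

Lemma Aut_morph (a : {perm gT}) : a \in Aut [set: gT] ->
  forall x y, a (x * y) = a x * a y.
Proof. by move=> /Aut_morphic /morphicP H x y; apply: H; rewrite inE. Qed.

End Aux.

Theorem lemma3p2 (gT : finGroupType) (S : {set gT}) :
  cyclic [set: gT] -> S != set0 ->
  cay_connected S -> arc_transitive S -> normal_cayley S ->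
  (forall s, s \in S -> <[s]> = [set: gT]) /\ acts_regularly (AutGS S) S.
Proof.
move=> cG _ conn atr nS.
have trans s t : s \in S -> t \in S -> exists2 a, a \in AutGS S & a s = t.
  move=> sS tS.
  have a1 u : u \in S -> cay_arc S 1 u by rewrite /cay_arc invg1 mulg1.
  case: (atr _ _ _ _ (a1 _ sS) (a1 _ tS)) => p pA [p1 ps].
  exists p => //.
  rewrite inE (@AutCay_inAut gT S p nS pA p1) /=.
  have sub : p @: S \subset S.
    apply/subsetP => _ /imsetP[u uS ->].
    move: pA; rewrite inE => /forallP /(_ 1) /forallP /(_ u) /eqP.
    by rewrite a1 // /cay_arc p1 invg1 mulg1.
  by rewrite eqEcard sub (card_imset _ (@perm_inj _ p)) leqnn.
have AGS a : a \in AutGS S -> a \in Aut [set: gT] /\ a @: S = S.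
  by rewrite inE => /andP[? /eqP].
have abA := Aut_cyclic_abelian cG.
split.
  move=> s sS.
  have St t : t \in S -> t \in <[s]>.
    move=> tS; case: (trans s t sS tS) => a /AGS[aA _] <-.
    suff <- : <[a s]> = <[s]> :> {set gT} by exact: cycle_id.
      apply/eqP; rewrite (eq_subG_cyclic cG) ?subsetT //.
      have E : #[autm aA s] = #[s] := order_injm (injm_autm aA) (in_setT s).
      rewrite autmE in E.
      by rewrite -!orderE E.
  apply/setP => x; rewrite inE.
  apply: (@conn_ind gT S (fun x => x \in <[s]>) conn) => //=.
  by move=> t u tS; rewrite groupMl // St.
split; first by move=> a /AGS[].
move=> s t sS tS; case: (trans s t sS tS) => a aS ast.
exists a; split => // b [bS bst].
have [aA _] := AGS a aS; have [bA _] := AGS b bS.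
apply/permP => x.
have a1 : a 1 = 1 by rewrite -(autmE aA) morph1.
have b1 : b 1 = 1 by rewrite -(autmE bA) morph1.
apply/eqP; apply: (@conn_ind gT S (fun x => a x == b x) conn) => /=.
  by rewrite a1 b1.
move=> u y uS.
case: (trans s u sS uS) => d /AGS[dA _] <-.
have com : commute a d by apply: (centsP abA).
have com2 : commute b d by apply: (centsP abA).
have E : a (d s) = b (d s).
  by rewrite -permM -com permM ast -bst -permM com2 permM.
by rewrite (@Aut_morph gT a aA) (@Aut_morph gT b bA) E (inj_eq (mulgI _)).
Qed.
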